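(* Let $x,y:\mathbb{Z}\to\mathbb{R}$ be the coordinates of the vertices of a polygon indexed by $u\in\mathbb{Z}$, and let $X+ih_1$ and $Y+ih_2$ be their discrete analytic extensions (as in the context). Write $h=(h_1,h_2)$. Then there exists $F:\mathbb{Z}^2\to\mathbb{R}$ such that for all $(u,v)\in\mathbb{Z}^2$ $$F(u+1,v)-F(u,v)=-\big[h(u+\tfrac12,v-\tfrac12),\,h(u+\tfrac12,v+\tfrac12)\big],$$ $$F(u,v+1)-F(u,v)=\big[h(u-\tfrac12,v+\tfrac12),\,h(u+\tfrac12,v+\tfrac12)\big].$$
   Context: $[X,Y]$ is the determinant of the $2\times2$ matrix with columns $X,Y$. Let $(\mathbb{Z}^2)^*=(\mathbb{Z}+\tfrac12)^2$ be the dual lattice. Functions $g:\mathbb{Z}^2\to\mathbb{R}$ and $k:(\mathbb{Z}^2)^*\to\mathbb{R}$ are complex conjugate (and $g+ik$ is called discrete analytic) if for all $(u,v)\in\mathbb{Z}^2$: $g(u+1,v)-g(u,v)=k(u+\tfrac12,v+\tfrac12)-k(u+\tfrac12,v-\tfrac12)$ and $g(u,v+1)-g(u,v)=-(k(u+\tfrac12,v+\tfrac12)-k(u-\tfrac12,v+\tfrac12))$ (discrete Cauchy–Riemann equations). The discrete analytic extension of $x$ is the unique discrete analytic $X+ih_1$ with $X(u,0)=x(u)$ and $h_1(u+\tfrac12,\tfrac12)=-h_1(u+\tfrac12,-\tfrac12)$ for all $u$; similarly $Y+ih_2$ extends $y$. *)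

(* Defs.v *)
From Stdlib Require Import Reals ZArith.
Open Scope R_scope.

Definition det2 (X Y : R * R) : R := fst X * snd Y - snd X * fst Y.

(* Functions on Z^2 have type Z -> Z -> R.
   Functions on the dual lattice (Z+1/2)^2 are encoded as k : Z -> Z -> R,
   where  k a b  stands for the value at the point (a + 1/2, b + 1/2). *)

Definition complex_conjugate (g k : Z -> Z -> R) : Prop :=
  forall u v : Z,
    g (u + 1)%Z v - g u v = k u v - k u (v - 1)%Z /\
    g u (v + 1)%Z - g u v = - (k u v - k (u - 1)%Z v).

Definition discrete_analytic_extension (x : Z -> R) (X h : Z -> Z -> R) : Prop :=
  complex_conjugate X h /\
  (forall u : Z, X u 0%Z = x u) /\
  (forall u : Z, h u 0%Z = - h u (-1)%Z).

(* Main.v *)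
Require Import Defs.
From Stdlib Require Import Reals ZArith Lra Lia.
Open Scope R_scope.

Fixpoint psum (f : nat -> R) (n : nat) : R :=
  match n with O => 0 | S m => psum f m + f m end.

Definition prim (a : Z -> R) (z : Z) : R :=
  if Z_le_dec 0 z then psum (fun k => a (Z.of_nat k)) (Z.to_nat z)
  else - psum (fun k => a (- Z.of_nat k - 1)%Z) (Z.to_nat (- z)).

Lemma prim0 a : prim a 0%Z = 0.
Proof. reflexivity. Qed.

Lemma prim_step a z : prim a (z + 1)%Z - prim a z = a z.
Proof.
  unfold prim.
  destruct (Z_le_dec 0 z) as [H|H].
  - destruct (Z_le_dec 0 (z+1)) as [H'|H']; [|lia].
    replace (Z.to_nat (z+1)) with (S (Z.to_nat z)) by lia.
    simpl. rewrite Z2Nat.id by lia. lra.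
  - destruct (Z.to_nat (-z)) eqn:E; [lia|].
    assert (Hn : Z.to_nat (- (z+1)) = n) by lia.
    simpl.
    replace (- Z.of_nat n - 1)%Z with z by lia.
    destruct (Z_le_dec 0 (z+1)) as [H'|H'].
    + assert (n = O) by lia. subst n. replace (Z.to_nat (z+1)) with O by lia. rewrite H0. simpl. lra.
    + rewrite Hn. lra.
Qed.

Lemma harm (X h : Z -> Z -> R) : complex_conjugate X h -> forall u v,
  h (u+1)%Z v = 4 * h u v - h (u-1)%Z v - h u (v+1)%Z - h u (v-1)%Z.
Proof.
  intros H u v.
  destruct (H u v) as [A1 A2].
  destruct (H u (v+1)%Z) as [B1 B2].
  destruct (H (u+1)%Z v) as [C1 C2].
  replace (v + 1 - 1)%Z with v in B1 by lia.
  replace (u + 1 - 1)%Z with u in C2 by lia.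
  lra.
Qed.

Theorem mainTheorem10 (x y : Z -> R) (X h1 Y h2 : Z -> Z -> R)
  (HX : discrete_analytic_extension x X h1)
  (HY : discrete_analytic_extension y Y h2) :
  exists F : Z -> Z -> R, forall u v : Z,
    F (u + 1)%Z v - F u v =
      - det2 (h1 u (v - 1)%Z, h2 u (v - 1)%Z) (h1 u v, h2 u v) /\
    F u (v + 1)%Z - F u v =
      det2 (h1 (u - 1)%Z v, h2 (u - 1)%Z v) (h1 u v, h2 u v).
Proof.
  destruct HX as [CX _]. destruct HY as [CY _].
  set (A := fun u v => - det2 (h1 u (v - 1)%Z, h2 u (v - 1)%Z) (h1 u v, h2 u v)).
  set (B := fun u v => det2 (h1 (u - 1)%Z v, h2 (u - 1)%Z v) (h1 u v, h2 u v)).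
  assert (Cl : forall u v, A u v + B (u+1)%Z v = B u v + A u (v+1)%Z).
  { intros u v. unfold A, B, det2; simpl.
    replace (u + 1 - 1)%Z with u by lia.
    replace (v + 1 - 1)%Z with v by lia.
    rewrite (harm X h1 CX u v), (harm Y h2 CY u v). ring. }
  exists (fun u v => prim (fun w => A w 0%Z) u + prim (B u) v).
  intros u v. split.
  - set (D := fun v => prim (fun w => A w 0%Z) (u+1)%Z + prim (B (u+1)%Z) v
                       - (prim (fun w => A w 0%Z) u + prim (B u) v) - A u v).
    assert (HD : forall z, D z = D 0%Z).
    { assert (St : forall z, D (z+1)%Z = D z).
      { intros z. unfold D.
        pose proof (prim_step (B (u+1)%Z) z).
        pose proof (prim_step (B u) z).
        pose proof (Cl u z). lra. }
      apply Z.peano_ind; [reflexivity| |].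
      - intros z Hz. rewrite <- Z.add_1_r, St. exact Hz.
      - intros z Hz. rewrite <- Hz, <- (St (Z.pred z)). f_equal. lia. }
    assert (D0 : D 0%Z = 0).
    { unfold D. rewrite !prim0. pose proof (prim_step (fun w => A w 0%Z) u).
      simpl in *. lra. }
    specialize (HD v). unfold D in HD, D0. change (- det2 (h1 u (v - 1)%Z, h2 u (v - 1)%Z) (h1 u v, h2 u v)) with (A u v). lra.
  - pose proof (prim_step (B u) v). change (det2 (h1 (u - 1)%Z v, h2 (u - 1)%Z v) (h1 u v, h2 u v)) with (B u v). lra.
Qed.
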